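(* Let $p_{C_0}(z,w)=\left(-z(w^2-4w+1)+w^2+4w+1\right)^2$. Then $$2\pi\,\mathrm{m}(p_{C_0})=16\,D\!\left((2+\sqrt3)i\right)+\frac{8\pi}{3}\log(2+\sqrt3),$$ and in particular $20\,v_{\mathrm{tet}}<2\pi\,\mathrm{m}(p_{C_0})$.
   Context: Mahler measure: $\mathrm{m}(P)=\frac{1}{(2\pi i)^2}\int_{|z|=|w|=1}\log|P(z,w)|\frac{dz}{z}\frac{dw}{w}$. $D$ is the Bloch–Wigner dilogarithm $D(z)=\operatorname{Im}(\mathrm{Li}_2(z))+\arg(1-z)\log|z|$, $\mathrm{Li}_2(z)=-\int_0^z\frac{\log(1-t)}{t}dt$. $v_{\mathrm{tet}}=D(e^{i\pi/3})\approx1.01494$. *)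

(* Defs.v *)
From Stdlib Require Import Reals.
Open Scope R_scope.

Definition C : Type := (R * R)%type.
Definition Cof (r : R) : C := (r, 0).
Definition Cadd (a b : C) : C := (fst a + fst b, snd a + snd b).
Definition Copp (a : C) : C := (- fst a, - snd a).
Definition Csub (a b : C) : C := Cadd a (Copp b).
Definition Cmul (a b : C) : C :=
  (fst a * fst b - snd a * snd b, fst a * snd b + snd a * fst b).
Definition Cscal (r : R) (a : C) : C := (r * fst a, r * snd a).
Definition Cnorm (a : C) : R := sqrt (fst a ^ 2 + snd a ^ 2).
Definition cexp (t : R) : C := (cos t, sin t).

(* Principal argument in (-pi, pi] (with Arg 0 = 0);
   this is Im of the principal complex logarithm. *)
Definition Arg (a : C) : R :=
  let x := fst a in let y := snd a in
  match Rlt_dec 0 x with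
  | left _ => atan (y / x)
  | right _ =>
    match Rlt_dec x 0 with
    | left _ => match Rle_dec 0 y with
                | left _ => atan (y / x) + PI
                | right _ => atan (y / x) - PI
                end
    | right _ =>
      match Rlt_dec 0 y with
      | left _ => PI / 2
      | right _ => match Rlt_dec y 0 with
                   | left _ => - (PI / 2)
                   | right _ => 0
                   end
      end
    end
  end.

Definition is_RInt (f : R -> R) (a b l : R) : Prop :=
  exists pr : Riemann_integrable f a b, RiemannInt pr = l.

(* Mahler measure of a two-variable function P (a polynomial):
   m(P) = (1/(2 pi)^2) \int_0^{2pi}\int_0^{2pi} log|P(e^{i th}, e^{i ph})| dph dth.
   Since log|P| may have logarithmic singularities on the torus, the
   (Lebesgue) integral is expressed as the limit, as eps -> 0+, of the
   (Riemann, iterated) integrals of the continuous truncations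
   log(max(|P|, eps)); by monotone convergence this is the Lebesgue integral. *)
Definition is_mahler_measure (P : C -> C -> C) (m : R) : Prop :=
  exists I : R -> R,
    (forall eps, 0 < eps ->
       exists G : R -> R,
         (forall th, 0 <= th <= 2 * PI ->
            is_RInt (fun ph => ln (Rmax eps (Cnorm (P (cexp th) (cexp ph)))))
                    0 (2 * PI) (G th)) /\
         is_RInt G 0 (2 * PI) (I eps)) /\
    (forall e, 0 < e -> exists d, 0 < d /\
       forall eps, 0 < eps < d -> Rabs (I eps / (2 * PI) ^ 2 - m) < e).

(* Im Li_2(z) = - Im \int_0^z log(1-t)/t dt, along the straight segment
   t = s z, s in [0,1]: Im Li_2(z) = - \int_0^1 Arg(1 - s z) / s ds. *)
Definition is_ImLi2 (z : C) (v : R) : Prop :=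
  is_RInt (fun s => - (Arg (Csub (Cof 1) (Cscal s z)) / s)) 0 1 v.

Definition is_BlochWigner (z : C) (v : R) : Prop :=
  exists li, is_ImLi2 z li /\ v = li + Arg (Csub (Cof 1) z) * ln (Cnorm z).

Definition pC0 (z w : C) : C :=
  let w2 := Cmul w w in
  let q := Cadd (Copp (Cmul z (Cadd (Csub w2 (Cscal 4 w)) (Cof 1))))
                (Cadd (Cadd w2 (Cscal 4 w)) (Cof 1)) in
  Cmul q q.

(* Main.v *)
Require Import Defs.
From Stdlib Require Import Reals.
Open Scope R_scope.
From Stdlib Require Import Lra Lia Psatz Nsatz.
From Coquelicot Require Import Coquelicot.
Open Scope R_scope.

Lemma toD f a b l : is_RInt f a b l -> Defs.is_RInt f a b l.
Proof.
  intros H. assert (E: ex_RInt f a b) by (exists l; auto).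
  exists (ex_RInt_Reals_0 _ _ _ E). rewrite <- RInt_Reals. now apply is_RInt_unique.
Qed.

Lemma cont2d_2 (f : R -> R -> R) x y :
  continuity_2d_pt f x y -> continuity_pt (fun v => f x v) y.
Proof.
  intros H eps Heps. destruct (H (mkposreal eps Heps)) as [d Hd].
  exists d. split; [apply cond_pos|]. intros v [_ Hv].
  apply Hd; simpl; [rewrite Rminus_eq_0, Rabs_R0; apply cond_pos| exact Hv].
Qed.

Lemma cont2d_1 (f : R -> R -> R) x y :
  continuity_2d_pt f x y -> continuity_pt (fun u => f u y) x.
Proof.
  intros H eps Heps. destruct (H (mkposreal eps Heps)) as [d Hd].
  exists d. split; [apply cond_pos|]. intros v [_ Hv].
  apply Hd; simpl; [exact Hv|rewrite Rminus_eq_0, Rabs_R0; apply cond_pos].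
Qed.

Lemma ex_RInt_cpt (f : R -> R) a b :
  (forall x, continuity_pt f x) -> ex_RInt f a b.
Proof.
  intros H. apply (@ex_RInt_continuous R_CompleteNormedModule). intros z _.
  apply continuity_pt_filterlim. apply H.
Qed.

Lemma RInt_minus' (f g : R -> R) a b : ex_RInt f a b -> ex_RInt g a b ->
  RInt (fun x => f x - g x) a b = RInt f a b - RInt g a b.
Proof. intros; apply (RInt_minus f g a b); auto. Qed.
Lemma RInt_plus' (f g : R -> R) a b : ex_RInt f a b -> ex_RInt g a b ->
  RInt (fun x => f x + g x) a b = RInt f a b + RInt g a b.
Proof. intros; apply (RInt_plus f g a b); auto. Qed.
Lemma RInt_scal' (f : R -> R) a b l : ex_RInt f a b ->
  RInt (fun x => l * f x) a b = l * RInt f a b.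
Proof. intros; apply (RInt_scal f a b l); auto. Qed.
Lemma RInt_const' a b c : RInt (fun _ => c) a b = (b - a) * c.
Proof. apply (RInt_const a b c). Qed.
Lemma ex_RInt_minus' (f g : R -> R) a b : ex_RInt f a b -> ex_RInt g a b ->
  ex_RInt (fun x => f x - g x) a b.
Proof. intros; apply (ex_RInt_minus f g a b); auto. Qed.
Lemma ex_RInt_plus' (f g : R -> R) a b : ex_RInt f a b -> ex_RInt g a b ->
  ex_RInt (fun x => f x + g x) a b.
Proof. intros; apply (ex_RInt_plus f g a b); auto. Qed.
Lemma ex_RInt_scal' (f : R -> R) a b l : ex_RInt f a b ->
  ex_RInt (fun x => l * f x) a b.
Proof. intros; apply (ex_RInt_scal f a b l); auto. Qed.

Lemma param_cont_le (f : R -> R -> R) a b x0 : a <= b ->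
  (forall y, a <= y <= b -> continuity_2d_pt f x0 y) ->
  (forall x, ex_RInt (f x) a b) ->
  continuity_pt (fun x => RInt (f x) a b) x0.
Proof.
  intros Hab Hc Hex eps Heps.
  assert (Hp : 0 < eps / (b - a + 1)) by (apply Rdiv_lt_0_compat; lra).
  destruct (uniform_continuity_2d_1d' f a b x0 Hc (mkposreal _ Hp)) as [d Hd].
  exists d. split; [apply cond_pos|]. intros x [_ Hx]. simpl in Hx. unfold Rdist in *. simpl.
  unfold Rdist. rewrite <- RInt_minus' by auto.
  eapply Rle_lt_trans.
  apply abs_RInt_le_const with (M := eps / (b - a + 1)); auto.
  apply ex_RInt_minus'; auto.
  intros t Ht. left.
  apply (Hd t x0 t x); auto.
  - split; pose proof (cond_pos d); lra.
  - assert (Rabs (x - x0) <= d) by lra. apply Rabs_le_between in H. lra.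
  - rewrite Rminus_eq_0, Rabs_R0; apply cond_pos.
  - apply Rlt_le_trans with ((b - a + 1) * (eps / (b - a + 1))).
    apply Rmult_lt_compat_r; auto; lra. right; field; lra.
Qed.

Lemma param_cont (f : R -> R -> R) a b x0 :
  (forall y, continuity_2d_pt f x0 y) ->
  (forall x, ex_RInt (f x) a b) ->
  continuity_pt (fun x => RInt (f x) a b) x0.
Proof.
  intros Hc Hex. destruct (Rle_dec a b) as [H|H].
  - apply param_cont_le; auto.
  - apply continuity_pt_ext with (f := fun x => - RInt (f x) b a).
    intros x. rewrite <- (opp_RInt_swap (f x) b a). reflexivity.
    apply ex_RInt_swap; auto.
    apply continuity_pt_opp with (f := fun x => RInt (f x) b a). apply param_cont_le; auto. lra.
    intros x; apply ex_RInt_swap; auto.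
Qed.

Lemma RInt_correct' (f : R -> R) a b : ex_RInt f a b -> is_RInt f a b (RInt f a b).
Proof. intros H. apply (RInt_correct (V:=R_CompleteNormedModule)). exact H. Qed.

Ltac toR := match goal with |- @eq _ ?a ?b => change (@eq R a b) end.

Lemma is_derive_minus' (f g : R -> R) x df dg : is_derive f x df -> is_derive g x dg ->
  is_derive (fun t => f t - g t) x (df - dg).
Proof. intros; apply (is_derive_minus f g); auto. Qed.
Lemma is_derive_plus' (f g : R -> R) x df dg : is_derive f x df -> is_derive g x dg ->
  is_derive (fun t => f t + g t) x (df + dg).
Proof. intros; apply (is_derive_plus f g); auto. Qed.
Lemma is_derive_scal' (f : R -> R) x c df : is_derive f x df ->
  is_derive (fun t => c * f t) x (c * df).
Proof. intros; apply (is_derive_scal f x c); auto. Qed.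

Lemma RInt_opp' (f : R -> R) a b : ex_RInt f a b -> RInt (fun x => - f x) a b = - RInt f a b.
Proof. intros; apply (RInt_opp f a b); auto. Qed.
Lemma RInt_swap' (f : R -> R) a b : ex_RInt f a b -> RInt f b a = - RInt f a b.
Proof. intros H. symmetry. apply (opp_RInt_swap f a b); auto. Qed.

Lemma cont2d_swap (f : R -> R -> R) x y :
  continuity_2d_pt f x y -> continuity_2d_pt (fun u v => f v u) y x.
Proof.
  intros H eps. destruct (H eps) as [d Hd]. exists d. intros u v Hu Hv. apply Hd; auto.
Qed.

Lemma fubini (f : R -> R -> R) a b c d : (forall x y, continuity_2d_pt f x y) ->
  RInt (fun x => RInt (fun y => f x y) c d) a b =
  RInt (fun y => RInt (fun x => f x y) a b) c d.
Proof.
  intros Hf.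
  set (g := fun x => RInt (fun y => f x y) c d).
  assert (exf1 : forall x u v, ex_RInt (fun y => f x y) u v).
  { intros x u v. apply ex_RInt_cpt. intros y. apply cont2d_2. auto. }
  assert (exf2 : forall y u v, ex_RInt (fun x => f x y) u v).
  { intros y u v. apply ex_RInt_cpt. intros x. apply cont2d_1. auto. }
  assert (gc : forall x, continuity_pt g x).
  { intros x. apply param_cont; auto. }
  assert (exg : forall u v, ex_RInt g u v) by (intros; apply ex_RInt_cpt; auto).
  assert (hc : forall u v y, continuity_pt (fun y => RInt (fun x => f x y) u v) y).
  { intros u v y. apply (param_cont (fun y x => f x y)); auto.
    intros x. apply (cont2d_swap f). auto. }
  assert (dP : forall t, is_derive (fun t => RInt g a t) t (g t)).
  { intros t. apply (is_derive_RInt g (fun t => RInt g a t) a t).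
    apply filter_forall. intros b0. apply RInt_correct'. auto.
    apply continuity_pt_filterlim. auto. }
  assert (dI : forall y t, is_derive (fun u => RInt (fun x => f x y) a u) t (f t y)).
  { intros y t. apply (is_derive_RInt (fun x => f x y) (fun u => RInt (fun x => f x y) a u) a t).
    apply filter_forall. intros b0. apply RInt_correct'. auto.
    apply continuity_pt_filterlim. apply cont2d_1. auto. }
  assert (dQ : forall t, is_derive (fun t => RInt (fun y => RInt (fun x => f x y) a t) c d) t (g t)).
  { intros t.
    assert (E : g t = RInt (fun y => Derive (fun u => RInt (fun x => f x y) a u) t) c d).
    { unfold g. apply RInt_ext. intros y _. symmetry. apply is_derive_unique. auto. }
    rewrite E.
    apply (is_derive_RInt_param (fun t y => RInt (fun x => f x y) a t) c d t).
    - apply filter_forall. intros x0 y _. eexists. apply dI.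
    - intros y _. apply continuity_2d_pt_ext with (f := f).
      intros u v. symmetry. apply is_derive_unique. auto. auto.
    - apply filter_forall. intros y. apply ex_RInt_cpt. auto. }
  assert (dPQ : forall t, is_derive (fun t => RInt g a t - RInt (fun y => RInt (fun x => f x y) a t) c d) t 0).
  { intros t. replace 0 with (g t - g t) by ring.
    apply (is_derive_minus (fun t => RInt g a t) (fun t => RInt (fun y => RInt (fun x => f x y) a t) c d)); auto. }
  assert (H0 : RInt g a a - RInt (fun y => RInt (fun x => f x y) a a) c d = 0).
  { rewrite (RInt_ext (fun y => RInt (fun x => f x y) a a) (fun _ => 0)).
    rewrite RInt_const'. rewrite (RInt_point a g). change (@zero R_CompleteNormedModule) with 0. ring.
    intros x _. apply (RInt_point a (fun x0 => f x0 x)). }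
  assert (Hab : RInt g a b - RInt (fun y => RInt (fun x => f x y) a b) c d = 0).
  { destruct (Rtotal_order a b) as [H|[H|H]].
    - rewrite <- H0. symmetry.
      apply (eq_is_derive (fun t => RInt g a t - RInt (fun y => RInt (fun x => f x y) a t) c d)); auto.
    - subst. auto.
    - rewrite <- H0.
      apply (eq_is_derive (fun t => RInt g a t - RInt (fun y => RInt (fun x => f x y) a t) c d)); auto. }
  apply Rminus_diag_uniq in Hab. exact Hab.
Qed.

Lemma pos_lin t c : Rabs t < 1 -> -1 <= c <= 1 -> 0 < 1 + t * c.
Proof.
  intros Ht Hc. destruct (Rle_dec 0 t).
  - rewrite Rabs_pos_eq in Ht by lra. nra.
  - rewrite Rabs_left in Ht by lra. nra.
Qed.

Lemma quad_pos t c : 0 < 1 + t * c -> -1 <= c <= 1 -> 0 < 1 + t^2 + 2*t*c.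
Proof.
  intros H Hc.
  assert (0 <= t^2*(1-c^2)). { apply Rmult_le_pos. nra. nra. }
  assert (E : 1 + t^2 + 2*t*c = (1+t*c)^2 + t^2*(1-c^2)) by ring.
  rewrite E. assert (0 < (1+t*c)^2) by (apply pow_lt; lra). lra.
Qed.

Lemma pos_quad t c : Rabs t < 1 -> -1 <= c <= 1 -> 0 < 1 + t^2 + 2*t*c.
Proof. intros; apply quad_pos; auto. apply pos_lin; auto. Qed.

Lemma cos_bnd x : -1 <= cos x <= 1.
Proof. split; [apply COS_bound | apply COS_bound]. Qed.

Definition psi t p := 2 * atan (t * sin p / (1 + t * cos p)).

Lemma psi_deriv t p : 0 < 1 + t * cos p ->
  is_derive (fun p => psi t p) p (2*t*(t + cos p)/(1 + t^2 + 2*t*cos p)).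
Proof.
  intros H. unfold psi.
  assert (S : sin p ^ 2 = 1 - cos p ^ 2) by (pose proof (sin2_cos2 p); unfold Rsqr in *; nra).
  assert (Q : 0 < 1 + t^2 + 2*t*cos p) by nra.
  assert (E : (1 + t * cos p) * (1 + t * cos p) + t * sin p * (t * sin p) = 1 + t^2 + 2*t*cos p).
  { replace (t * sin p * (t * sin p)) with (t^2 * sin p ^2) by ring. rewrite S. ring. }
  auto_derive.
  - lra.
  - field_simplify.
    + rewrite S. f_equal; ring.
    + lra.
    + split; [lra|]. rewrite E. lra.
Qed.

Lemma ln_quad_deriv t p : 0 < 1 + t^2 + 2*t*cos p ->
  is_derive (fun u => ln (1 + u^2 + 2*u*cos p)) t ((2*t + 2*cos p)/(1 + t^2 + 2*t*cos p)).
Proof.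
  intros H. auto_derive. lra. field. lra.
Qed.

Lemma locally_abs1 t0 (P : R -> Prop) : Rabs t0 < 1 -> (forall u, Rabs u < 1 -> P u) -> locally t0 P.
Proof.
  intros Ht HP. assert (Hr : 0 < (1 - Rabs t0)/2) by lra.
  assert (K : forall z : R, Rabs (z - t0) < (1 - Rabs t0)/2 -> Rabs z < 1).
  { intros z Hz. pose proof (Rabs_triang (z - t0) t0). replace (z - t0 + t0) with z in H by ring. lra. }
  exists (mkposreal _ Hr). intros y Hy. apply HP. apply K. exact Hy.
Qed.

Lemma l2d_abs1 t0 p (P : R -> R -> Prop) : Rabs t0 < 1 -> (forall u v, Rabs u < 1 -> P u v) -> locally_2d P t0 p.
Proof.
  intros Ht HP. assert (Hr : 0 < (1 - Rabs t0)/2) by lra.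
  exists (mkposreal _ Hr). intros u v Hu Hv. apply HP. simpl in Hu.
  pose proof (Rabs_triang (u - t0) t0). replace (u - t0 + t0) with u in H by ring. lra.
Qed.

Ltac c2d := repeat first [ apply continuity_2d_pt_plus | apply continuity_2d_pt_mult
  | apply continuity_2d_pt_minus | apply continuity_2d_pt_opp
  | apply continuity_2d_pt_const | apply continuity_2d_pt_id1 | apply continuity_2d_pt_id2
  | apply (continuity_1d_2d_pt_comp cos (fun u v => v)); [apply continuity_cos|]
  | apply (continuity_1d_2d_pt_comp cos (fun u v => u)); [apply continuity_cos|] ].

Definition lam a b t : R := RInt (fun p => ln (1 + t^2 + 2*t*cos p)) a b.
Definition dlam t p := (2*t + 2*cos p)/(1 + t^2 + 2*t*cos p).

Lemma lam_deriv a b t0 : Rabs t0 < 1 -> is_derive (lam a b) t0 (RInt (dlam t0) a b).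
Proof.
  intros Ht.
  assert (E : RInt (dlam t0) a b = RInt (fun p => Derive (fun u => ln (1 + u^2 + 2*u*cos p)) t0) a b).
  { apply RInt_ext. intros x _. symmetry. apply is_derive_unique. apply ln_quad_deriv.
    apply pos_quad; auto. apply cos_bnd. }
  rewrite E. unfold lam.
  apply (is_derive_RInt_param (fun t p => ln (1 + t^2 + 2*t*cos p)) a b t0).
  - apply locally_abs1; auto. intros u Hu p _. eexists. apply ln_quad_deriv.
    apply pos_quad; auto. apply cos_bnd.
  - intros p _. apply continuity_2d_pt_ext_loc with (f := fun u v => (2*u + 2*cos v) * / (1 + u*u + 2*u*cos v)).
    + apply l2d_abs1; auto. intros u v Hu. symmetry. apply is_derive_unique.
      replace (1 + u*u + 2*u*cos v) with (1 + u^2 + 2*u*cos v) by ring.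
      apply ln_quad_deriv. apply pos_quad; auto. apply cos_bnd.
    + apply continuity_2d_pt_mult. c2d.
      apply continuity_2d_pt_inv. c2d.
      replace (1 + t0*t0 + 2*t0*cos p) with (1 + t0^2 + 2*t0*cos p) by ring.
      apply Rgt_not_eq. apply pos_quad; auto. apply cos_bnd.
  - apply locally_abs1; auto. intros u Hu. apply ex_RInt_cpt. intros p.
    apply continuity_pt_filterlim. apply (ex_derive_continuous (fun p => ln (1 + u^2 + 2*u*cos p))).
    auto_derive. apply pos_quad; auto. apply cos_bnd.
Qed.

Lemma psi_FTC t a b : (forall p, Rmin a b <= p <= Rmax a b -> 0 < 1 + t * cos p) ->
  RInt (fun p => 2*t*(t + cos p)/(1 + t^2 + 2*t*cos p)) a b = psi t b - psi t a.
Proof.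
  intros Hp. apply is_RInt_unique.
  apply (is_RInt_derive (fun p => psi t p) (fun p => 2*t*(t + cos p)/(1 + t^2 + 2*t*cos p))).
  - intros x Hx. apply psi_deriv. auto.
  - intros x Hx. apply (ex_derive_continuous (fun p => 2*t*(t + cos p)/(1 + t^2 + 2*t*cos p))).
    pose proof (Hp x Hx). assert (S : sin x ^ 2 = 1 - cos x ^ 2) by (pose proof (sin2_cos2 x); unfold Rsqr in *; nra).
    auto_derive. apply Rgt_not_eq. apply quad_pos; auto. apply cos_bnd.
Qed.

Lemma t_dlam t a b : (forall p, Rmin a b <= p <= Rmax a b -> 0 < 1 + t * cos p) ->
  t * RInt (dlam t) a b = psi t b - psi t a.
Proof.
  intros Hp. rewrite <- psi_FTC by auto.
  assert (Ex : ex_RInt (dlam t) a b).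
  { apply (@ex_RInt_continuous R_CompleteNormedModule). intros z Hz. unfold dlam.
    apply (ex_derive_continuous (fun p => (2*t + 2*cos p)/(1 + t^2 + 2*t*cos p))).
    pose proof (Hp z Hz). pose proof (cos_bnd z). auto_derive. apply Rgt_not_eq. apply quad_pos; auto. }
  rewrite <- RInt_scal' by auto. apply RInt_ext. intros x Hx. unfold dlam.
  assert (0 < 1 + t*cos x) by (apply Hp; lra). pose proof (cos_bnd x).
  change (t * ((2*t + 2*cos x)/(1 + t^2 + 2*t*cos x)) = 2*t*(t + cos x)/(1 + t^2 + 2*t*cos x)). field. apply Rgt_not_eq. apply quad_pos; auto.
Qed.

Lemma lam_cont a b r : Rabs r < 1 -> continuity_pt (lam a b) r.
Proof.
  intros H. apply continuity_pt_filterlim. apply (ex_derive_continuous (lam a b)).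
  eexists. apply lam_deriv. auto.
Qed.

Lemma lam_zero_pt a b : lam a b 0 = 0.
Proof.
  unfold lam. rewrite (RInt_ext _ (fun _ => 0)). rewrite RInt_const'. ring.
  intros x _. replace (1 + 0^2 + 2*0*cos x) with 1 by ring. apply ln_1.
Qed.

Lemma psi_sin0 t p : sin p = 0 -> psi t p = 0.
Proof. intros H. unfold psi. rewrite H. replace (t * 0 / (1 + t * cos p)) with 0 by (unfold Rdiv; ring).
  rewrite atan_0. ring. Qed.

Lemma lam_2pi r : Rabs r < 1 -> lam 0 (2*PI) r = 0.
Proof.
  intros Hr.
  destruct (MVT_gen (lam 0 (2*PI)) 0 r (fun _ => 0)) as [c [_ Hc]].
  - intros x Hx. assert (Hx1 : Rabs x < 1).
    { unfold Rmin, Rmax in Hx. apply Rabs_def2 in Hr. apply Rabs_def1; destruct (Rle_dec 0 r); lra. }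
    assert (Hx0 : x <> 0) by (unfold Rmin, Rmax in Hx; destruct (Rle_dec 0 r); lra).
    assert (E : RInt (dlam x) 0 (2*PI) = 0).
    { assert (K : x * RInt (dlam x) 0 (2*PI) = psi x (2*PI) - psi x 0).
      { apply t_dlam. intros p _. apply pos_lin; auto. apply cos_bnd. }
      rewrite (psi_sin0 x (2*PI)), (psi_sin0 x 0) in K by (apply sin_2PI || apply sin_0).
      destruct (Rmult_integral _ _ (eq_trans K (Rminus_diag_eq 0 0 eq_refl))); [contradiction|auto]. }
    assert (D := lam_deriv 0 (2*PI) x Hx1). rewrite E in D. exact D.
  - intros x Hx. apply lam_cont.
    unfold Rmin, Rmax in Hx. apply Rabs_def2 in Hr. apply Rabs_def1; destruct (Rle_dec 0 r); lra.
  - rewrite lam_zero_pt in Hc. lra.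
Qed.

Lemma jensen A B : 0 <= B < A ->
  RInt (fun t => ln (A + B * cos t)) 0 (2*PI) = 2*PI*ln ((A + sqrt (A^2 - B^2))/2).
Proof.
  intros [HB HA].
  set (s := sqrt (A^2 - B^2)).
  assert (Hs0 : 0 <= s) by apply sqrt_pos.
  assert (Hs2 : s * s = A^2 - B^2) by (apply sqrt_sqrt; nra).
  set (M := (A + s)/2).
  assert (HM : 0 < M) by (unfold M; lra).
  set (r := B / (2*M)).
  assert (Hr : Rabs r < 1).
  { unfold r. rewrite Rabs_pos_eq. apply Rmult_lt_reg_r with (2*M). lra.
    unfold Rdiv. rewrite Rmult_assoc, Rinv_l by lra. unfold M. lra.
    apply Rdiv_le_0_compat; lra. }
  assert (Eq : forall t, A + B * cos t = M * (1 + r^2 + 2*r*cos t)).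
  { intros t. unfold r. field_simplify; [|lra]. 
    assert (E2 : 4*M^2 + B^2 = 4*A*M) by (unfold M; nra).
    apply Rmult_eq_reg_r with (4*M); [|lra]. field_simplify; [|lra]. nra. }
  rewrite (RInt_ext _ (fun t => ln M + ln (1 + r^2 + 2*r*cos t))).
  - rewrite RInt_plus'. rewrite RInt_const'. fold (lam 0 (2*PI) r). rewrite lam_2pi by auto.
    fold M. match goal with |- @eq _ ?a ?b => change (@eq R a b) end. ring.
    apply ex_RInt_cpt. intros; apply continuity_pt_const. intros u v; auto.
    apply ex_RInt_cpt. intros x. apply continuity_pt_filterlim.
    apply (ex_derive_continuous (fun t => ln (1 + r^2 + 2*r*cos t))).
    auto_derive. apply pos_quad; auto. apply cos_bnd.
  - intros x _. rewrite Eq. apply ln_mult. auto. apply pos_quad; auto. apply cos_bnd.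
Qed.

Definition jf t s : R := match Req_EM_T s 0 with left _ => t | right _ => atan (t*s)/s end.
Definition J t : R := RInt (jf t) 0 1.
Definition g1 t s : R := 1 / (1 + t^2 * s^2).

Lemma g1_pos t s : 0 < 1 + t^2 * s^2.
Proof. nra. Qed.

Lemma g1_cont2d x y : continuity_2d_pt g1 x y.
Proof.
  apply continuity_2d_pt_ext with (f := fun u v => 1 * / (1 + u*u*(v*v))).
  intros u v. unfold g1. unfold Rdiv. f_equal. f_equal. ring.
  apply continuity_2d_pt_mult. c2d. apply continuity_2d_pt_inv. c2d.
  pose proof (g1_pos x y). apply Rgt_not_eq. replace (1 + x*x*(y*y)) with (1 + x^2*y^2) by ring. lra.
Qed.

Lemma jf_int t s : jf t s = RInt (fun u => g1 u s) 0 t.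
Proof.
  symmetry. apply is_RInt_unique. unfold jf. destruct (Req_EM_T s 0) as [H|H].
  - subst. unfold g1. apply (is_RInt_ext (fun _ => 1)).
    intros x _. toR. replace (1 + x^2*0^2) with 1 by ring. field.
    replace t with (scal (t - 0) 1) at 2. apply (@is_RInt_const R_NormedModule).
    unfold scal; simpl; unfold mult; simpl. ring.
  - replace (atan (t*s)/s) with (atan (t*s)/s - atan (0*s)/s).
    apply (is_RInt_derive (fun u => atan (u*s)/s) (fun u => g1 u s)).
    + intros x _. unfold g1. auto_derive. auto. field. split; auto. nra.
    + intros x _. apply (ex_derive_continuous (fun u => g1 u s)). unfold g1. auto_derive. pose proof (g1_pos x s). lra.
    + rewrite Rmult_0_l, atan_0. unfold Rdiv. ring.
Qed.

Lemma g1_cpt1 s x : continuity_pt (fun u => g1 u s) x.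
Proof. apply (cont2d_1 g1). apply g1_cont2d. Qed.
Lemma g1_cpt2 t x : continuity_pt (g1 t) x.
Proof. apply (cont2d_2 g1). apply g1_cont2d. Qed.

Lemma jf_deriv t s : is_derive (fun u => jf u s) t (g1 t s).
Proof.
  apply is_derive_ext with (f := fun u => RInt (fun v => g1 v s) 0 u).
  intros; rewrite jf_int; auto.
  apply (is_derive_RInt (fun v => g1 v s) (fun u => RInt (fun v => g1 v s) 0 u) 0 t).
  apply filter_forall. intros b0. apply RInt_correct'. apply ex_RInt_cpt. apply g1_cpt1.
  apply continuity_pt_filterlim. apply g1_cpt1.
Qed.

Lemma jf_cont t s : continuity_pt (jf t) s.
Proof.
  apply continuity_pt_ext with (f := fun s => RInt (fun u => g1 u s) 0 t).
  intros; rewrite jf_int; auto.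
  apply (param_cont (fun s u => g1 u s)).
  intros y. apply (cont2d_swap g1). apply g1_cont2d.
  intros x. apply ex_RInt_cpt. intros; apply g1_cpt1.
Qed.

Lemma ex_jf t a b : ex_RInt (jf t) a b.
Proof. apply ex_RInt_cpt. apply jf_cont. Qed.

Lemma J_deriv t : is_derive J t (RInt (g1 t) 0 1).
Proof.
  assert (E : RInt (g1 t) 0 1 = RInt (fun s => Derive (fun u => jf u s) t) 0 1).
  { apply RInt_ext. intros x _. symmetry. apply is_derive_unique. apply jf_deriv. }
  rewrite E. unfold J.
  apply (is_derive_RInt_param jf 0 1 t).
  - apply filter_forall. intros x0 s _. eexists. apply jf_deriv.
  - intros s _. apply continuity_2d_pt_ext with (f := g1).
    intros u v. symmetry. apply is_derive_unique. apply jf_deriv. apply g1_cont2d.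
  - apply filter_forall. intros y. apply ex_jf.
Qed.

Lemma J_cont t : continuity_pt J t.
Proof. apply continuity_pt_filterlim. apply (ex_derive_continuous J). eexists. apply J_deriv. Qed.

Lemma tJ' t : t * RInt (g1 t) 0 1 = atan t.
Proof.
  rewrite <- RInt_scal'. 2:{ apply ex_RInt_cpt. apply g1_cpt2. }
  replace (atan t) with (atan (t*1) - atan (t*0)) by (rewrite Rmult_1_r, Rmult_0_r, atan_0; ring).
  apply is_RInt_unique.
  apply (is_RInt_derive (fun s => atan (t*s)) (fun s => t * g1 t s)).
  - intros x _. unfold g1. auto_derive. auto. field. pose proof (g1_pos t x). lra.
  - intros x _. apply (ex_derive_continuous (fun s => t * g1 t s)). unfold g1. auto_derive. pose proof (g1_pos t x). lra.
Qed.

Lemma J0 : J 0 = 0.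
Proof.
  unfold J. rewrite (RInt_ext _ (fun _ => 0)). rewrite RInt_const'. ring.
  intros x _. unfold jf. destruct (Req_EM_T x 0). auto. rewrite Rmult_0_l, atan_0. toR. unfold Rdiv; ring.
Qed.

Lemma H_2J t : 0 <= t < 1 -> lam 0 (PI/2) t = 2 * J t.
Proof.
  intros Ht. destruct (Req_dec t 0) as [H0|H0].
  { subst. rewrite lam_zero_pt, J0. ring. }
  assert (Hpi : 0 < PI/2) by (pose proof PI_RGT_0; lra).
  destruct (MVT_gen (fun t => lam 0 (PI/2) t - 2 * J t) 0 t (fun _ => 0)) as [c [_ Hc]].
  - intros x Hx. rewrite Rmin_left, Rmax_right in Hx by lra.
    assert (Hx1 : Rabs x < 1) by (apply Rabs_def1; lra).
    assert (K1 : x * RInt (dlam x) 0 (PI/2) = psi x (PI/2) - psi x 0).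
    { apply t_dlam. intros p _. apply pos_lin; auto. apply cos_bnd. }
    assert (K2 := tJ' x).
    unfold psi in K1. rewrite sin_PI2, cos_PI2, sin_0 in K1.
    replace (x * 1 / (1 + x * 0)) with x in K1 by field.
    replace (x * 0 / (1 + x * cos 0)) with 0 in K1 by (unfold Rdiv; ring).
    rewrite atan_0 in K1.
    assert (E : RInt (dlam x) 0 (PI/2) - 2 * RInt (g1 x) 0 1 = 0).
    { apply Rmult_eq_reg_l with x; [|lra]. rewrite Rmult_minus_distr_l. 
      replace (x * (2 * RInt (g1 x) 0 1)) with (2 * (x * RInt (g1 x) 0 1)) by ring.
      rewrite K1, K2. ring. }
    assert (D := is_derive_minus' (lam 0 (PI/2)) (fun t => 2 * J t) x _ _
      (lam_deriv 0 (PI/2) x Hx1) (is_derive_scal' J x 2 _ (J_deriv x))).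
    rewrite E in D. exact D.
  - intros x Hx. rewrite Rmin_left, Rmax_right in Hx by lra.
    apply continuity_pt_minus. apply lam_cont. apply Rabs_def1; lra.
    apply continuity_pt_scal. apply J_cont.
  - rewrite lam_zero_pt, J0 in Hc. lra.
Qed.

Lemma T_deriv x : 0 < x -> is_derive (fun x => J x - J (/x) - PI/2 * ln x) x 0.
Proof.
  intros Hx.
  assert (D1 := J_deriv x).
  assert (D2 : is_derive (fun x => J (/x)) x (RInt (g1 (/x)) 0 1 * (- / x^2))).
  { assert (Hi : is_derive (fun x => / x) x (- / x^2)).
    { auto_derive. lra. field. lra. }
    assert (K := is_derive_comp J (fun x => /x) x _ _ (J_deriv (/x)) Hi).
    rewrite Rmult_comm. exact K. }
  assert (D3 : is_derive (fun x => PI/2 * ln x) x (PI/2 * / x)).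
  { auto_derive. lra. field. lra. }
  assert (D := is_derive_minus' _ _ x _ _ (is_derive_minus' _ _ x _ _ D1 D2) D3).
  assert (E : RInt (g1 x) 0 1 - RInt (g1 (/ x)) 0 1 * - / x ^ 2 - PI / 2 * / x = 0).
  { assert (K1 := tJ' x). assert (K2 := tJ' (/x)). rewrite atan_inv in K2 by auto.
    apply Rmult_eq_reg_l with x; [|lra].
    replace (x * (RInt (g1 x) 0 1 - RInt (g1 (/ x)) 0 1 * - / x ^ 2 - PI / 2 * / x))
      with (x * RInt (g1 x) 0 1 + / x * RInt (g1 (/ x)) 0 1 - PI / 2) by (field; lra).
    rewrite K1, K2. ring. }
  rewrite E in D. simpl in D. exact D.
Qed.

Lemma J_inv k : 0 < k -> J k = J (/k) + PI/2 * ln k.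
Proof.
  intros Hk.
  destruct (MVT_gen (fun x => J x - J (/x) - PI/2 * ln x) 1 k (fun _ => 0)) as [c [_ Hc]].
  - intros x Hx. apply T_deriv. unfold Rmin, Rmax in Hx. destruct (Rle_dec 1 k); lra.
  - intros x Hx. apply continuity_pt_filterlim.
    apply (ex_derive_continuous (fun x => J x - J (/x) - PI/2 * ln x)). eexists. apply T_deriv.
    unfold Rmin, Rmax in Hx. destruct (Rle_dec 1 k); lra.
  - rewrite Rinv_1, ln_1 in Hc. lra.
Qed.

Definition FF th ph := 32 + 8 * cos ph ^ 2 + (32 - 8 * cos ph ^ 2) * cos th.

Lemma Cnorm_pC0 th ph : Cnorm (pC0 (cexp th) (cexp ph)) = FF th ph.
Proof.
  unfold Cnorm, pC0, cexp, FF, Cmul, Cadd, Csub, Copp, Cscal, Cof. simpl.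
  set (c := cos ph). set (s := sin ph). set (u := cos th). set (v := sin th).
  assert (Hcs : c^2 + s^2 = 1) by (unfold c, s; rewrite <- (sin2_cos2 ph); unfold Rsqr; ring).
  assert (Huv : u^2 + v^2 = 1) by (unfold u, v; rewrite <- (sin2_cos2 th); unfold Rsqr; ring).
  set (X := - (u * (c * c - s * s + - (4 * c) + 1) - v * (c * s + s * c + - (4 * s) + 0)) +
     (c * c - s * s + 4 * c + 1)).
  set (Y := - (u * (c * s + s * c + - (4 * s) + 0) + v * (c * c - s * s + - (4 * c) + 1)) +
     (c * s + s * c + 4 * s + 0)).
  clearbody c s u v.
  assert (EX : X = c*((2*c+4) + (4-2*c)*u) - s*(4-2*c)*v).
  { assert (K : X - (c*((2*c+4) + (4-2*c)*u) - s*(4-2*c)*v) = (c^2+s^2-1)*(u-1)) by (unfold X; ring).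
    rewrite Hcs in K. lra. }
  assert (EY : Y = s*((2*c+4) + (4-2*c)*u) + c*(4-2*c)*v).
  { assert (K : Y - (s*((2*c+4) + (4-2*c)*u) + c*(4-2*c)*v) = v*(c^2+s^2-1)) by (unfold Y; ring).
    rewrite Hcs in K. lra. }
  assert (E2 : X^2 + Y^2 = 32 + 8*c^2 + (32 - 8*c^2)*u).
  { rewrite EX, EY.
    assert (K : (c*((2*c+4) + (4-2*c)*u) - s*(4-2*c)*v)^2 + (s*((2*c+4) + (4-2*c)*u) + c*(4-2*c)*v)^2
       - (32 + 8*c^2 + (32 - 8*c^2)*u) =
       (c^2+s^2-1)*(((2*c+4) + (4-2*c)*u)^2 + ((4-2*c)*v)^2) + (4-2*c)^2*(u^2+v^2-1)) by ring.
    rewrite Hcs, Huv in K. lra. }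
  replace ((X * X - Y * Y) * ((X * X - Y * Y) * 1) + (X * Y + Y * X) * ((X * Y + Y * X) * 1))
    with ((X^2+Y^2)^2) by ring.
  rewrite sqrt_pow2 by nra. rewrite E2. ring.
Qed.

Lemma poly_ineq1 e d : 0 < e -> 0 <= d -> (2*e+d)^5 <= (e+d)*(3*e+d)^4.
Proof.
  intros He Hd.
  assert (K : (e+d)*(3*e+d)^4 - (2*e+d)^5 = 49*e^5 + 109*e^4*d + 82*e^3*d^2 + 26*e^2*d^3 + 3*e*d^4) by ring.
  assert (0 <= 49*e^5 + 109*e^4*d + 82*e^3*d^2 + 26*e^2*d^3 + 3*e*d^4).
  { repeat apply Rplus_le_le_0_compat; repeat apply Rmult_le_pos; try apply pow_le; lra. }
  lra.
Qed.

Lemma poly_ineq2 e x : 0 < e -> 0 <= x <= e -> (x+e)^5 <= e*(x+2*e)^4.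
Proof.
  intros He Hx.
  assert (K : e*(x+2*e)^4 - (x+e)^5 = 15*e^5 + 27*e^4*x + 14*e^3*x^2 - 2*e^2*x^3 - 4*e*x^4 - x^5) by ring.
  assert (H1 : e^2*x^3 <= e^3*x^2).
  { replace (e^2*x^3) with ((e^2*x^2)*x) by ring. replace (e^3*x^2) with ((e^2*x^2)*e) by ring.
    apply Rmult_le_compat_l. apply Rmult_le_pos; apply pow_le; lra. lra. }
  assert (H2 : e*x^4 <= e^3*x^2).
  { replace (e*x^4) with ((e*x^2)*(x*x)) by ring. replace (e^3*x^2) with ((e*x^2)*(e*e)) by ring.
    apply Rmult_le_compat_l. apply Rmult_le_pos; [lra| apply pow_le; lra]. nra. }
  assert (H3 : x^5 <= e^3*x^2).
  { replace (x^5) with ((x^2)*(x*x*x)) by ring. replace (e^3*x^2) with ((x^2)*(e*e*e)) by ring.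
    apply Rmult_le_compat_l. apply pow_le; lra.
    assert (x*x <= e*e) by nra. assert (0 <= x*x) by nra. nra. }
  assert (0 <= e^5) by (apply pow_le; lra). assert (0 <= e^4*x) by (apply Rmult_le_pos; [apply pow_le|]; lra).
  assert (0 <= e^3*x^2) by (apply Rmult_le_pos; apply pow_le; lra).
  lra.
Qed.

Lemma ln_le' a b : 0 < a -> a <= b -> ln a <= ln b.
Proof. intros Ha Hab. destruct (Req_dec a b). subst; lra. left. apply ln_increasing; lra. Qed.

Lemma lnmax_bounds F eps : 0 <= F -> 0 < eps ->
  5*ln(F+eps) - 4*ln(F+2*eps) <= ln (Rmax eps F) <= ln(F+eps).
Proof.
  intros HF He. assert (Hm : 0 < Rmax eps F) by (apply Rlt_le_trans with eps; [lra|apply Rmax_l]).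
  split.
  - assert (E5 : 5 * ln (F+eps) = ln ((F+eps)^5)) by (rewrite ln_pow by lra; simpl; ring).
    assert (E4 : 4 * ln (F+2*eps) = ln ((F+2*eps)^4)) by (rewrite ln_pow by lra; simpl; ring).
    rewrite E5, E4.
    assert (K : (F+eps)^5 <= Rmax eps F * (F+2*eps)^4).
    { unfold Rmax. destruct (Rle_dec eps F).
      - replace F with (eps + (F - eps)) by ring.
        replace (eps + (F - eps) + eps) with (2*eps + (F-eps)) by ring.
        replace (eps + (F - eps) + 2*eps) with (3*eps + (F-eps)) by ring.
        apply poly_ineq1; lra.
      - apply poly_ineq2; lra. }
    assert (0 < (F+2*eps)^4) by (apply pow_lt; lra).
    apply Rplus_le_reg_r with (ln ((F + 2 * eps) ^ 4)).
    ring_simplify. rewrite <- ln_mult by lra. apply ln_le'. apply pow_lt; lra. lra.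
  - apply ln_le'; auto. unfold Rmax; destruct (Rle_dec eps F); lra.
Qed.

Lemma exp_ge1 x : 1 + x <= exp x.
Proof. destruct (Req_dec x 0). subst. rewrite exp_0. lra. left. apply exp_ineq1. auto. Qed.

Lemma ln_le_xm1 x : 0 < x -> ln x <= x - 1.
Proof.
  intros Hx. rewrite <- (ln_exp (x-1)). apply ln_le'; auto. pose proof (exp_ge1 (x-1)). lra.
Qed.

Definition Mf eta c := ((32+8*c^2+eta) + sqrt((32+8*c^2+eta)^2 - (32-8*c^2)^2))/2.
Definition M0 c := (4 + 2*Rabs c)^2.

Lemma jensen_F eta ph : 0 < eta ->
  RInt (fun th => ln (FF th ph + eta)) 0 (2*PI) = 2*PI*ln (Mf eta (cos ph)).
Proof.
  intros He. unfold Mf. rewrite <- jensen.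
  apply RInt_ext. intros x _. unfold FF. f_equal. ring.
  pose proof (cos_bnd ph). split; nra.
Qed.

Lemma Mf_bounds eta c : 0 < eta <= 1 -> -1 <= c <= 1 -> M0 c <= Mf eta c <= M0 c + 5*sqrt eta.
Proof.
  intros He Hc.
  set (S := sqrt ((32+8*c^2+eta)^2 - (32-8*c^2)^2)).
  assert (Hrc : Rabs c ^2 = c^2) by (rewrite RPow_abs, Rabs_pos_eq; [ring| nra]).
  assert (Ha : 0 <= Rabs c <= 1) by (split; [apply Rabs_pos| apply Rabs_le; lra]).
  assert (HM0 : M0 c = (32 + 8*c^2 + 32*Rabs c)/2) by (unfold M0; rewrite <- Hrc; field).
  assert (Hw := sqrt_pos eta). assert (Hw2 : sqrt eta * sqrt eta = eta) by (apply sqrt_sqrt; lra).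
  assert (Hwe : eta <= sqrt eta).
  { assert (sqrt eta <= 1). { rewrite <- sqrt_1. apply sqrt_le_1_alt. lra. } nra. }
  assert (S1 : 32 * Rabs c <= S).
  { unfold S. rewrite <- (sqrt_pow2 (32 * Rabs c)) by lra. apply sqrt_le_1_alt.
    replace ((32*Rabs c)^2) with (1024 * Rabs c ^2) by ring. rewrite Hrc. nra. }
  assert (S2 : S <= 32 * Rabs c + 9 * sqrt eta).
  { unfold S. rewrite <- (sqrt_pow2 (32 * Rabs c + 9 * sqrt eta)) by lra. apply sqrt_le_1_alt.
    replace ((32 * Rabs c + 9 * sqrt eta)^2) with (1024 * Rabs c^2 + 576 * Rabs c * sqrt eta + 81 * (sqrt eta * sqrt eta)) by ring.
    rewrite Hrc, Hw2. assert (0 <= Rabs c * sqrt eta) by (apply Rmult_le_pos; lra). nra. }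
  unfold Mf. fold S. rewrite HM0. lra.
Qed.

Lemma lnM_bound eta c : 0 < eta <= 1 -> -1 <= c <= 1 ->
  0 <= ln (Mf eta c) - ln (M0 c) <= 5/16 * sqrt eta.
Proof.
  intros He Hc. destruct (Mf_bounds eta c He Hc) as [H1 H2].
  assert (H16 : 16 <= M0 c) by (unfold M0; pose proof (Rabs_pos c); nra).
  split.
  - assert (ln (M0 c) <= ln (Mf eta c)) by (apply ln_le'; lra). lra.
  - rewrite <- ln_div by lra. eapply Rle_trans. apply ln_le_xm1. apply Rdiv_lt_0_compat; lra.
    assert (Hw := sqrt_pos eta).
    apply Rmult_le_reg_r with (M0 c). lra. unfold Rdiv.
    replace ((Mf eta c * / M0 c - 1) * M0 c) with (Mf eta c - M0 c) by (field; lra).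
    nra.
Qed.

Lemma ln_cpt y : 0 < y -> continuity_pt ln y.
Proof. intros H. apply derivable_continuous_pt. exists (/y). apply derivable_pt_lim_ln. auto. Qed.

Lemma cpt_ln (f : R -> R) x : continuity_pt f x -> 0 < f x -> continuity_pt (fun x => ln (f x)) x.
Proof. intros H1 H2. apply (continuity_pt_comp f ln). auto. apply ln_cpt. auto. Qed.

Lemma Rmax_cpt e x : continuity_pt (fun x => Rmax e x) x.
Proof.
  apply continuity_pt_ext with (f := fun x => (e + x + Rabs (x - e))/2).
  intros y. unfold Rmax. destruct (Rle_dec e y). rewrite Rabs_pos_eq by lra. field.
  rewrite Rabs_left by lra. field.
  apply continuity_pt_div. apply continuity_pt_plus. apply continuity_pt_plus.
  apply continuity_pt_const. intros u v; auto. apply continuity_pt_id.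
  apply (continuity_pt_comp (fun x => x - e) Rabs). apply continuity_pt_minus.
  apply continuity_pt_id. apply continuity_pt_const. intros u v; auto. apply Rcontinuity_abs.
  apply continuity_pt_const. intros u v; auto. lra.
Qed.

Lemma FF_nonneg th ph : 0 <= FF th ph.
Proof. unfold FF. pose proof (cos_bnd th). pose proof (cos_bnd ph). nra. Qed.

Definition fm eps th ph := ln (Rmax eps (FF th ph)).

Lemma FF_cont2d x y : continuity_2d_pt FF x y.
Proof.
  apply continuity_2d_pt_ext with (f := fun u v => 32 + 8 * (cos v * cos v) + (32 - 8 * (cos v * cos v)) * cos u).
  intros. unfold FF. ring. c2d.
Qed.

Lemma fm_cont2d eps x y : 0 < eps -> continuity_2d_pt (fm eps) x y.
Proof.
  intros He. unfold fm. apply (continuity_1d_2d_pt_comp (fun z => ln (Rmax eps z)) FF).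
  apply cpt_ln. apply Rmax_cpt. apply Rlt_le_trans with eps; [lra| apply Rmax_l].
  apply FF_cont2d.
Qed.

Lemma ex_lnFF eta ph a b : 0 < eta -> ex_RInt (fun th => ln (FF th ph + eta)) a b.
Proof.
  intros He. apply ex_RInt_cpt. intros x. apply cpt_ln.
  apply continuity_pt_plus. apply (cont2d_1 FF). apply FF_cont2d. apply continuity_pt_const. intros u v; auto.
  pose proof (FF_nonneg x ph). lra.
Qed.

Lemma K_bound eps ph : 0 < eps <= 1/2 ->
  Rabs (RInt (fun th => fm eps th ph) 0 (2*PI) - 2*PI*ln (M0 (cos ph))) <= 2*PI*(2*sqrt eps).
Proof.
  intros He. pose proof PI_RGT_0 as Hpi.
  assert (Hc := cos_bnd ph).
  assert (exf : ex_RInt (fun th => fm eps th ph) 0 (2*PI)).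
  { apply ex_RInt_cpt. intros x. apply (cont2d_1 (fm eps)). apply fm_cont2d. lra. }
  assert (U : RInt (fun th => fm eps th ph) 0 (2*PI) <= 2*PI*ln (Mf eps (cos ph))).
  { rewrite <- jensen_F by lra. apply RInt_le; auto. lra. apply ex_lnFF; lra.
    intros x _. unfold fm. destruct (lnmax_bounds (FF x ph) eps); [apply FF_nonneg|lra|]. lra. }
  assert (L : 2*PI*(5*ln (Mf eps (cos ph)) - 4*ln (Mf (2*eps) (cos ph))) <= RInt (fun th => fm eps th ph) 0 (2*PI)).
  { replace (2*PI*(5*ln (Mf eps (cos ph)) - 4*ln (Mf (2*eps) (cos ph)))) with
      (5*(2*PI*ln (Mf eps (cos ph))) - 4*(2*PI*ln (Mf (2*eps) (cos ph)))) by ring.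
    rewrite <- !jensen_F by lra.
    rewrite <- !RInt_scal' by (apply ex_lnFF; lra).
    rewrite <- RInt_minus' by (apply ex_RInt_scal'; apply ex_lnFF; lra).
    apply RInt_le; auto. lra. apply ex_RInt_minus'; apply ex_RInt_scal'; apply ex_lnFF; lra.
    intros x _. unfold fm. destruct (lnmax_bounds (FF x ph) eps); [apply FF_nonneg|lra|]. lra. }
  destruct (lnM_bound eps (cos ph)) as [B1 B2]; try lra.
  destruct (lnM_bound (2*eps) (cos ph)) as [B3 B4]; try lra.
  assert (Hs2 : sqrt (2*eps) <= 8/5 * sqrt eps).
  { rewrite sqrt_mult by lra. apply Rmult_le_compat_r. apply sqrt_pos.
    rewrite <- (sqrt_pow2 (8/5)) by lra. apply sqrt_le_1_alt. lra. }
  assert (Hse := sqrt_pos eps).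
  apply Rabs_le. split; nra.
Qed.

Lemma M0cos_cpt x : continuity_pt (fun ph => ln (M0 (cos ph))) x.
Proof.
  apply cpt_ln. unfold M0. apply continuity_pt_ext with (f := fun ph => (4 + 2*Rabs (cos ph)) * (4 + 2*Rabs (cos ph))).
  intros; ring.
  assert (c1 : continuity_pt (fun ph => Rabs (cos ph)) x).
  { apply (continuity_pt_comp cos Rabs). apply continuity_cos. apply Rcontinuity_abs. }
  assert (c2 : continuity_pt (fun ph => 4 + 2 * Rabs (cos ph)) x).
  { apply continuity_pt_plus. apply continuity_pt_const. intros u v; reflexivity.
    apply continuity_pt_scal. exact c1. }
  apply continuity_pt_mult; exact c2.
  pose proof (Rabs_pos (cos x)). unfold M0. nra.
Qed.

Definition mM := / (2*PI) * RInt (fun ph => ln (M0 (cos ph))) 0 (2*PI).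

Lemma mahler : is_mahler_measure pC0 mM.
Proof.
  pose proof PI_RGT_0 as Hpi.
  exists (fun eps => RInt (fun th => RInt (fun ph => fm eps th ph) 0 (2*PI)) 0 (2*PI)).
  split.
  - intros eps He. exists (fun th => RInt (fun ph => fm eps th ph) 0 (2*PI)). split.
    + intros th _. apply toD.
      apply is_RInt_ext with (f := fun ph => fm eps th ph).
      intros x _. unfold fm. rewrite Cnorm_pC0. auto.
      apply RInt_correct'. apply ex_RInt_cpt. intros x. apply (cont2d_2 (fm eps)). apply fm_cont2d; auto.
    + apply toD. apply RInt_correct'. apply ex_RInt_cpt. intros x. apply param_cont.
      intros y. apply fm_cont2d; auto.
      intros z. apply ex_RInt_cpt. intros w. apply (cont2d_2 (fm eps)). apply fm_cont2d; auto.
  - intros e He. assert (Hd : 0 < Rmin (1/2) ((e/2)^2)).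
    { apply Rmin_pos. lra. apply pow_lt. lra. }
    exists (Rmin (1/2) ((e/2)^2)). split; auto.
    intros eps Heps.
    assert (He1 : 0 < eps <= 1/2) by (split; [lra|]; pose proof (Rmin_l (1/2) ((e/2)^2)); lra).
    assert (He2 : eps < (e/2)^2) by (pose proof (Rmin_r (1/2) ((e/2)^2)); lra).
    assert (Hsq : sqrt eps < e/2).
    { rewrite <- (sqrt_pow2 (e/2)) by lra. apply sqrt_lt_1_alt. lra. }
    rewrite (fubini (fm eps)) by (intros; apply fm_cont2d; lra).
    assert (exK : ex_RInt (fun ph => RInt (fun th => fm eps th ph) 0 (2*PI)) 0 (2*PI)).
    { apply ex_RInt_cpt. intros x. apply (param_cont (fun ph th => fm eps th ph)).
      intros y. apply (cont2d_swap (fm eps)). apply fm_cont2d; lra.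
      intros z. apply ex_RInt_cpt. intros w. apply (cont2d_1 (fm eps)). apply fm_cont2d; lra. }
    assert (exM : ex_RInt (fun ph => ln (M0 (cos ph))) 0 (2*PI)) by (apply ex_RInt_cpt; apply M0cos_cpt).
    assert (B : Rabs (RInt (fun ph => RInt (fun th => fm eps th ph) 0 (2*PI)) 0 (2*PI)
              - RInt (fun ph => 2*PI * ln (M0 (cos ph))) 0 (2*PI)) <= (2*PI - 0) * (2*PI*(2*sqrt eps))).
    { rewrite <- RInt_minus'; auto. apply abs_RInt_le_const. lra.
      apply ex_RInt_minus'; auto. apply ex_RInt_scal'; auto.
      intros t _. apply K_bound. auto. apply ex_RInt_scal'; auto. }
    rewrite RInt_scal' in B by auto.
    unfold mM.
    set (X := RInt (fun ph => RInt (fun th => fm eps th ph) 0 (2*PI)) 0 (2*PI)) in *.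
    set (Y := RInt (fun ph => ln (M0 (cos ph))) 0 (2*PI)) in *.
    replace (X / (2*PI)^2 - / (2*PI) * Y) with ((X - 2*PI*Y) / (2*PI)^2) by (field; lra).
    unfold Rdiv. rewrite Rabs_mult. rewrite Rabs_pos_eq with (x := / (2*PI)^2).
    2:{ left. apply Rinv_0_lt_compat. apply pow_lt. lra. }
    apply Rle_lt_trans with ((2 * PI - 0) * (2 * PI * (2 * sqrt eps)) * / (2 * PI) ^ 2).
    apply Rmult_le_compat_r. left. apply Rinv_0_lt_compat. apply pow_lt. lra. auto.
    replace ((2 * PI - 0) * (2 * PI * (2 * sqrt eps)) * / (2 * PI) ^ 2) with (2 * sqrt eps) by (field; lra).
    lra.
Qed.

Lemma RInt_shift (f : R -> R) a b c : (forall x, continuity_pt f x) ->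
  RInt f (a + c) (b + c) = RInt (fun y => f (y + c)) a b.
Proof.
  intros Hf. assert (K := RInt_comp_lin f 1 c a b).
  replace (1*a+c) with (a+c) in K by ring. replace (1*b+c) with (b+c) in K by ring.
  rewrite <- K. apply RInt_ext. intros x _. unfold scal; simpl; unfold mult; simpl.
  rewrite Rmult_1_l. f_equal. ring. apply ex_RInt_cpt; auto.
Qed.

Lemma RInt_refl (f : R -> R) a b c : (forall x, continuity_pt f x) ->
  RInt f (c - b) (c - a) = RInt (fun y => f (c - y)) a b.
Proof.
  intros Hf. assert (K := RInt_comp_lin f (-1) c a b).
  replace (-1*a+c) with (c-a) in K by ring. replace (-1*b+c) with (c-b) in K by ring.
  rewrite (RInt_swap' f) by (apply ex_RInt_cpt; auto).
  rewrite <- K. 2:{ apply ex_RInt_cpt; auto. }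
  assert (exg : ex_RInt (fun y => f (c - y)) a b).
  { apply ex_RInt_cpt. intros x. apply (continuity_pt_comp (fun y => c - y) f).
    apply continuity_pt_minus. apply continuity_pt_const. intros u v; auto. apply continuity_pt_id. auto. }
  rewrite (RInt_ext _ (fun y => - (f (c - y)))).
  rewrite RInt_opp' by auto. toR. ring.
  intros x _. unfold scal; simpl. unfold mult; simpl. replace (-1 * x + c) with (c - x) by ring. toR. ring.
Qed.

Lemma sym_int (g : R -> R) : (forall x, continuity_pt g x) ->
  RInt (fun ph => g (Rabs (cos ph))) 0 (2*PI) = 4 * RInt (fun ph => g (cos ph)) 0 (PI/2).
Proof.
  intros Hg. pose proof PI_RGT_0 as Hpi.
  set (f := fun ph => g (Rabs (cos ph))).
  assert (Hf : forall x, continuity_pt f x).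
  { intros x. unfold f. apply (continuity_pt_comp (fun ph => Rabs (cos ph)) g); auto.
    apply (continuity_pt_comp cos Rabs). apply continuity_cos. apply Rcontinuity_abs. }
  assert (ex : forall a b, ex_RInt f a b) by (intros; apply ex_RInt_cpt; auto).
  assert (E1 : RInt f 0 (2*PI) = RInt f 0 PI + RInt f PI (2*PI)).
  { symmetry. apply (RInt_Chasles f 0 PI (2*PI)); auto. }
  assert (E2 : RInt f PI (2*PI) = RInt f 0 PI).
  { assert (K := RInt_shift f 0 PI PI Hf).
    replace (0 + PI) with PI in K by ring. replace (PI + PI) with (2*PI) in K by ring.
    rewrite K. apply RInt_ext. intros x _. unfold f.
    rewrite neg_cos, Rabs_Ropp. auto. }
  assert (E3 : RInt f 0 PI = RInt f 0 (PI/2) + RInt f (PI/2) PI).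
  { symmetry. apply (RInt_Chasles f 0 (PI/2) PI); auto. }
  assert (E4 : RInt f (PI/2) PI = RInt f 0 (PI/2)).
  { assert (K := RInt_refl f 0 (PI/2) PI Hf).
    replace (PI - PI/2) with (PI/2) in K by field. replace (PI - 0) with PI in K by ring.
    rewrite K. apply RInt_ext. intros x _. unfold f.
    rewrite cos_minus, cos_PI, sin_PI. replace (-1 * cos x + 0 * sin x) with (- cos x) by ring.
    rewrite Rabs_Ropp. auto. }
  assert (E5 : RInt f 0 (PI/2) = RInt (fun ph => g (cos ph)) 0 (PI/2)).
  { apply RInt_ext. intros x Hx. rewrite Rmin_left, Rmax_right in Hx by lra. unfold f.
    rewrite Rabs_pos_eq. auto. apply cos_ge_0; lra. }
  fold f. toR. rewrite E1, E2, E3, E4, E5. ring.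
Qed.

Definition y0 := 2 - sqrt 3.

Lemma sqrt3_bounds : 1.732 < sqrt 3 < 1.7321.
Proof.
  split.
  - rewrite <- (sqrt_pow2 1.732) by lra. apply sqrt_lt_1_alt. lra.
  - rewrite <- (sqrt_pow2 1.7321) by lra. apply sqrt_lt_1_alt. lra.
Qed.

Lemma sqrt3_sq : sqrt 3 * sqrt 3 = 3.
Proof. apply sqrt_sqrt. lra. Qed.

Lemma y0_bounds : 0 < y0 < 1.
Proof. unfold y0. pose proof sqrt3_bounds. lra. Qed.

Lemma y0_eq : y0^2 - 4*y0 + 1 = 0.
Proof. unfold y0. pose proof sqrt3_sq. nra. Qed.

Lemma two_pi_mM : 2*PI*mM = 16 * J y0 - 4*PI*ln y0.
Proof.
  pose proof PI_RGT_0 as Hpi. pose proof y0_bounds as Hy. pose proof y0_eq as Hye.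
  set (g := fun x => 2 * ln (4 + 2 * Rabs x)).
  assert (Hg : forall x, continuity_pt g x).
  { intros x. unfold g. apply continuity_pt_scal. apply cpt_ln.
    apply continuity_pt_plus. apply continuity_pt_const. intros u v; auto.
    apply continuity_pt_scal. apply Rcontinuity_abs. pose proof (Rabs_pos x). lra. }
  assert (E1 : 2*PI*mM = RInt (fun ph => g (Rabs (cos ph))) 0 (2*PI)).
  { unfold mM. rewrite <- Rmult_assoc, Rinv_r, Rmult_1_l by lra.
    apply RInt_ext. intros x _. unfold g, M0. rewrite Rabs_Rabsolu.
    assert (0 < 4 + 2 * Rabs (cos x)) by (pose proof (Rabs_pos (cos x)); lra).
    replace ((4 + 2 * Rabs (cos x))^2) with ((4 + 2 * Rabs (cos x)) * (4 + 2 * Rabs (cos x))) by ring.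
    rewrite ln_mult by lra. toR. ring. }
  rewrite E1, sym_int by auto.
  assert (exl : ex_RInt (fun p => ln (1 + y0^2 + 2*y0*cos p)) 0 (PI/2)).
  { apply ex_RInt_cpt. intros x. apply cpt_ln.
    apply (cont2d_2 (fun u v => 1 + y0^2 + 2*y0*cos v) 0 x).
    apply continuity_2d_pt_ext with (f := fun u v => 1 + y0*y0 + 2*y0*cos v). intros; ring. c2d.
    apply pos_quad. apply Rabs_def1; lra. apply cos_bnd. }
  rewrite (RInt_ext _ (fun p => 2 * (ln (1 + y0^2 + 2*y0*cos p) - ln y0))).
  rewrite RInt_scal'. rewrite RInt_minus'. rewrite RInt_const'.
  fold (lam 0 (PI/2) y0). rewrite H_2J by lra. field.
  auto. apply ex_RInt_const. apply ex_RInt_minus'; auto. apply ex_RInt_const.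
  intros x Hx. rewrite Rmin_left, Rmax_right in Hx by lra. unfold g.
  rewrite Rabs_pos_eq by (apply cos_ge_0; lra).
  rewrite <- ln_div. f_equal. f_equal. field_simplify. 2: lra.
  apply Rmult_eq_reg_r with y0. 2: lra. field_simplify. 2: lra. nra.
  apply pos_quad. apply Rabs_def1; lra. apply cos_bnd. lra.
Qed.

Lemma Arg_pos a : 0 < fst a -> Arg a = atan (snd a / fst a).
Proof. intros H. unfold Arg. destruct (Rlt_dec 0 (fst a)); [auto| contradiction]. Qed.

Lemma mono_ge (f df : R -> R) a b : a <= b ->
  (forall x, a <= x <= b -> is_derive f x (df x)) -> (forall x, a <= x <= b -> 0 <= df x) -> f a <= f b.
Proof.
  intros Hab Hd Hp. destruct (Req_dec a b). subst; lra.
  destruct (MVT_gen f a b df) as [c [Hc E]].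
  - intros x Hx. rewrite Rmin_left, Rmax_right in Hx by lra. apply Hd; lra.
  - intros x Hx. rewrite Rmin_left, Rmax_right in Hx by lra. apply continuity_pt_filterlim.
    apply (ex_derive_continuous f). eexists. apply Hd; lra.
  - rewrite Rmin_left, Rmax_right in Hc by lra. assert (0 <= df c) by (apply Hp; lra).
    assert (0 <= df c * (b - a)) by (apply Rmult_le_pos; lra). lra.
Qed.

Lemma atan_le x : 0 <= x -> atan x <= x.
Proof.
  intros Hx. assert (K : 0 - atan 0 <= x - atan x).
  { apply (mono_ge (fun x => x - atan x) (fun x => 1 - /(1+x^2)) 0 x Hx).
    - intros t _. auto_derive. auto. field. nra.
    - intros t _. assert (/(1+t^2) <= 1). { rewrite <- Rinv_1. apply Rinv_le_contravar; nra. } lra. }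
  rewrite atan_0 in K. lra.
Qed.

Lemma atan_lb x : 0 <= x -> x - x^3/3 <= atan x.
Proof.
  intros Hx. assert (K : atan 0 - 0 + 0^3/3 <= atan x - x + x^3/3).
  { apply (mono_ge (fun x => atan x - x + x^3/3) (fun x => x^4/(1+x^2)) 0 x Hx).
    - intros t _. auto_derive. auto. field. nra.
    - intros t _. apply Rdiv_le_0_compat. nra. nra. }
  rewrite atan_0 in K. lra.
Qed.

Lemma PI_lb : 3.14 < PI.
Proof.
  assert (M := Machin_4_5_239).
  assert (A1 := atan_lb (/5)). assert (A2 := atan_le (/239)).
  assert (/5 - (/5)^3/3 <= atan (/5)) by (apply A1; lra).
  assert (atan (/239) <= /239) by (apply A2; lra).
  lra.
Qed.

Lemma ln_series_lb z : 0 <= z < 1 -> 2*z + 2*z^3/3 + 2*z^5/5 <= ln ((1+z)/(1-z)).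
Proof.
  intros Hz.
  assert (K : ln (1 + 0) - ln (1 - 0) - (2 * 0 + 2 * 0 ^ 3 / 3 + 2 * 0 ^ 5 / 5) <=
     ln (1 + z) - ln (1 - z) - (2 * z + 2 * z ^ 3 / 3 + 2 * z ^ 5 / 5)).
  { apply (mono_ge (fun z => ln (1+z) - ln (1-z) - (2*z + 2*z^3/3 + 2*z^5/5))
    (fun z => 2*z^6/(1-z^2)) 0 z (proj1 Hz)).
    - intros t Ht. auto_derive. lra. field. split; nra.
    - intros t Ht. apply Rdiv_le_0_compat. nra. nra. }
  rewrite ln_div by lra.
  replace (1+0) with 1 in K by ring. replace (1-0) with 1 in K by ring. rewrite ln_1 in K. lra.
Qed.

Definition kk := 2 + sqrt 3.

Lemma atan_kk : atan kk = 5*PI/12.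
Proof.
  pose proof PI_RGT_0.
  assert (Ht : tan (5*PI/12) = kk).
  { replace (5*PI/12) with (PI/4 + PI/6) by field.
    unfold tan. rewrite sin_plus, cos_plus, sin_PI4, cos_PI4, sin_PI6, cos_PI6.
    assert (Hs2 : 0 < sqrt 2) by (apply sqrt_lt_R0; lra).
    pose proof sqrt3_bounds. pose proof sqrt3_sq. unfold kk.
    field_simplify; try lra. 
    apply Rmult_eq_reg_r with (sqrt 3 - 1); [|lra]. unfold Rdiv. rewrite Rmult_assoc, Rinv_l by lra. nra. }
  rewrite <- Ht. apply atan_tan. split; lra.
Qed.

Lemma BW_d : is_BlochWigner (0, 2 + sqrt 3) (J kk - 5*PI/12 * ln kk).
Proof.
  pose proof sqrt3_bounds as Hr.
  exists (J kk). split.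
  - unfold is_ImLi2. apply toD.
    apply is_RInt_ext with (f := jf kk).
    + intros s Hs. rewrite Rmin_left, Rmax_right in Hs by lra.
      unfold jf. destruct (Req_EM_T s 0) as [E|E]. lra.
      unfold Csub, Cadd, Copp, Cscal, Cof. rewrite Arg_pos; simpl. 2: lra.
      replace ((0 + - (s * (2 + sqrt 3))) / (1 + - (s * 0))) with (- (kk * s)) by (unfold kk; field).
      rewrite atan_opp. field. auto.
    + apply RInt_correct'. apply ex_jf.
  - unfold Csub, Cadd, Copp, Cscal, Cof, Cnorm. rewrite Arg_pos; simpl. 2: lra.
    replace ((0 + - (2 + sqrt 3)) / (1 + - 0)) with (- kk) by (unfold kk; field).
    rewrite atan_opp, atan_kk.
    replace (0 * (0 * 1) + (2 + sqrt 3) * ((2 + sqrt 3) * 1)) with (kk^2) by (unfold kk; ring).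
    rewrite sqrt_pow2 by (unfold kk; lra). ring.
Qed.

Definition hh t := (sqrt 3/2)/(1 - t + t^2).
Lemma hh_den t : 0 < 1 - t + t^2.
Proof. nra. Qed.
Definition Phi s : R := RInt (fun u => hh (s*u)) 0 1.

Lemma hh2d x y : continuity_2d_pt (fun s u => hh (s*u)) x y.
Proof.
  apply continuity_2d_pt_ext with (f := fun s u => (sqrt 3/2) * / (1 - s*u + (s*u)*(s*u))).
  intros; unfold hh, Rdiv; f_equal; f_equal; ring.
  apply continuity_2d_pt_mult. c2d. apply continuity_2d_pt_inv. c2d.
  pose proof (hh_den (x*y)). apply Rgt_not_eq. replace (1 - x*y + x*y*(x*y)) with (1 - x*y + (x*y)^2) by ring. lra.
Qed.

Lemma Phi_cont s : continuity_pt Phi s.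
Proof.
  apply param_cont. intros; apply hh2d.
  intros x. apply ex_RInt_cpt. intros u. apply (cont2d_2 (fun s u => hh (s*u))). apply hh2d.
Qed.

Lemma Phi_eq s : 0 < s < 1 -> s * Phi s = atan (s*(sqrt 3/2)/(1 - s/2)).
Proof.
  intros Hs. pose proof sqrt3_sq as H3.
  unfold Phi. rewrite <- RInt_scal'.
  2:{ apply ex_RInt_cpt. intros u. apply (cont2d_2 (fun s u => hh (s*u))). apply hh2d. }
  replace (atan (s*(sqrt 3/2)/(1 - s/2))) with
    (atan (s*1*(sqrt 3/2)/(1 - s*1/2)) - atan (s*0*(sqrt 3/2)/(1 - s*0/2))).
  2:{ replace (s*0*(sqrt 3/2)/(1 - s*0/2)) with 0 by field. rewrite atan_0. rewrite Rmult_1_r. ring. }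
  apply is_RInt_unique.
  apply (is_RInt_derive (fun u => atan (s*u*(sqrt 3/2)/(1 - s*u/2))) (fun u => s * hh (s*u))).
  - intros x Hx. rewrite Rmin_left, Rmax_right in Hx by lra.
    assert (Hsx : s * x <= 1) by nra. assert (Hsx0 : 0 <= s*x) by nra.
    pose proof (hh_den (s*x)).
    auto_derive. lra. unfold hh.
    assert (E3 : sqrt 3 ^ 2 = 3) by (simpl; rewrite Rmult_1_r; exact H3).
    assert (Q : (2 + - (s * x)) * (2 + - (s * x)) + s * x * sqrt 3 * (s * x * sqrt 3) = 4 * (1 - s*x + (s*x)^2)).
    { replace (s * x * sqrt 3 * (s * x * sqrt 3)) with ((s*x)^2 * (sqrt 3 * sqrt 3)) by ring. rewrite H3. ring. }
    field_simplify.
    + rewrite E3. field. split; nra.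
    + lra.
    + split. lra. rewrite Q. lra.
  - intros x _. apply (ex_derive_continuous (fun u => s * hh (s*u))). unfold hh. auto_derive.
    pose proof (hh_den (s*x)). lra.
Qed.

Lemma BW_v : is_BlochWigner (cos (PI/3), sin (PI/3)) (RInt Phi 0 1).
Proof.
  pose proof sqrt3_bounds as Hr.
  exists (RInt Phi 0 1). split.
  - unfold is_ImLi2. apply toD.
    apply is_RInt_ext with (f := Phi).
    + intros s Hs. rewrite Rmin_left, Rmax_right in Hs by lra.
      rewrite cos_PI3, sin_PI3.
      unfold Csub, Cadd, Copp, Cscal, Cof. rewrite Arg_pos; simpl. 2: lra.
      replace ((0 + - (s * (sqrt 3 / 2))) / (1 + - (s * (1 / 2)))) with (- (s*(sqrt 3/2)/(1 - s/2))) by (field; lra).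
      rewrite atan_opp, <- Phi_eq by lra. toR. field. lra.
    + apply RInt_correct'. apply ex_RInt_cpt. apply Phi_cont.
  - unfold Cnorm. rewrite cos_PI3, sin_PI3. cbn [fst snd].
    replace ((1/2)^2 + (sqrt 3/2)^2) with 1.
    rewrite sqrt_1, ln_1, Rmult_0_r, Rplus_0_r. reflexivity.
    pose proof sqrt3_sq. replace ((sqrt 3/2)^2) with (sqrt 3 * sqrt 3/4) by field. lra.
Qed.

Lemma FTC' (F f : R -> R) a b : (forall x, is_derive F x (f x)) -> (forall x, ex_derive f x) ->
  RInt f a b = F b - F a.
Proof.
  intros H1 H2. apply is_RInt_unique. apply (is_RInt_derive F f); intros; auto.
  apply (ex_derive_continuous (V := R_NormedModule) f); auto.
Qed.

Definition Pp t := 1 + t - 2/3*t^3 - 3*t^4 + 4*t^5 - 4/3*t^6.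

Lemma hh_le t : 0 <= t <= 1 -> hh t <= sqrt 3/2 * Pp t.
Proof.
  intros Ht. unfold hh. pose proof (hh_den t). pose proof sqrt3_bounds.
  set (u := t - t^2).
  assert (Hu : 0 <= u) by (unfold u; nra).
  assert (E : Pp t * (1 - t + t^2) - 1 = u^3 * (1 - 2*t)^2 / 3) by (unfold Pp, u; field).
  assert (0 <= u^3 * (1 - 2*t)^2 / 3).
  { apply Rdiv_le_0_compat; [|lra]. apply Rmult_le_pos. apply pow_le; auto. apply pow2_ge_0. }
  replace (sqrt 3 / 2 / (1 - t + t^2)) with (sqrt 3 / 2 * / (1 - t + t^2)) by (unfold Rdiv; ring).
  apply Rmult_le_compat_l. lra.
  apply Rmult_le_reg_r with (1 - t + t^2). lra. rewrite Rinv_l by lra. lra.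
Qed.

Definition R0 s := 1 + s/2 - s^3/6 - 3*s^4/5 + 2*s^5/3 - 4*s^6/21.

Lemma Phi_le s : 0 <= s <= 1 -> Phi s <= sqrt 3/2 * R0 s.
Proof.
  intros Hs.
  assert (E : RInt (fun u => sqrt 3/2 * Pp (s*u)) 0 1 = sqrt 3/2 * R0 s).
  { rewrite (FTC' (fun u => sqrt 3/2*(u + s*u^2/2 - s^3*u^4/6 - 3*s^4*u^5/5 + 2*s^5*u^6/3 - 4*s^6*u^7/21))).
    unfold R0. toR. field.
    - intros x. unfold Pp. auto_derive. auto. field.
    - intros x. unfold Pp. auto_derive. auto. }
  rewrite <- E. unfold Phi. apply RInt_le. lra.
  apply ex_RInt_cpt. intros u. apply (cont2d_2 (fun s u => hh (s*u))). apply hh2d.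
  apply ex_RInt_cpt. intros u. apply continuity_pt_filterlim.
  apply (ex_derive_continuous (fun u => sqrt 3/2 * Pp (s*u))). unfold Pp. auto_derive. auto.
  intros x Hx. apply hh_le. split; nra.
Qed.

Lemma V_ub : RInt Phi 0 1 <= sqrt 3 / 2 * (103391/88200).
Proof.
  assert (E : RInt (fun s => sqrt 3/2 * R0 s) 0 1 = sqrt 3 / 2 * (103391/88200)).
  { rewrite (FTC' (fun s => sqrt 3/2*(s + s^2/4 - s^4/24 - 3*s^5/25 + s^6/9 - 4*s^7/147))).
    toR. field.
    - intros x. unfold R0. auto_derive. auto. field.
    - intros x. unfold R0. auto_derive. auto. }
  rewrite <- E. apply RInt_le. lra.
  apply ex_RInt_cpt. apply Phi_cont.
  apply ex_RInt_cpt. intros u. apply continuity_pt_filterlim.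
  apply (ex_derive_continuous (fun s => sqrt 3/2 * R0 s)). unfold R0. auto_derive. auto.
  intros x Hx. apply Phi_le. lra.
Qed.

Lemma J_lb t : 0 <= t -> t - t^3/9 <= J t.
Proof.
  intros Ht.
  assert (E : RInt (fun s => t - t^3*s^2/3) 0 1 = t - t^3/9).
  { rewrite (FTC' (fun s => t*s - t^3*s^3/9)).
    toR. field.
    - intros x. auto_derive. auto. field.
    - intros x. auto_derive. auto. }
  rewrite <- E. unfold J. apply RInt_le. lra.
  apply ex_RInt_cpt. intros u. apply continuity_pt_filterlim.
  apply (ex_derive_continuous (fun s => t - t^3*s^2/3)). auto_derive. auto.
  apply ex_jf.
  intros x Hx. unfold jf. destruct (Req_EM_T x 0). lra.
  assert (K := atan_lb (t*x)). 
  apply Rmult_le_reg_r with x. lra.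
  replace (atan (t*x)/x*x) with (atan (t*x)) by (field; auto).
  assert (t*x - (t*x)^3/3 <= atan (t*x)) by (apply K; nra).
  replace ((t - t ^ 3 * x ^ 2 / 3) * x) with (t*x - (t*x)^3/3) by field. lra.
Qed.

Lemma kk_y0 : / kk = y0.
Proof. unfold kk, y0. pose proof sqrt3_sq. pose proof sqrt3_bounds.
  apply Rmult_eq_reg_l with (2 + sqrt 3). rewrite Rinv_r by lra. nra. lra. Qed.

Lemma kk_z : kk = (1 + sqrt 3/3)/(1 - sqrt 3/3).
Proof. unfold kk. pose proof sqrt3_sq. pose proof sqrt3_bounds.
  apply Rmult_eq_reg_r with (1 - sqrt 3/3). 2: lra. field_simplify; lra. Qed.

Lemma final_num : 20 * (sqrt 3 / 2 * (103391/88200)) <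
  16 * (y0 - y0^3/9) + 4 * PI * (2*(sqrt 3/3) + 2*(sqrt 3/3)^3/3 + 2*(sqrt 3/3)^5/5).
Proof.
  pose proof sqrt3_bounds as Hr. pose proof sqrt3_sq as H3. pose proof PI_lb as Hpi.
  assert (Ez : 2*(sqrt 3/3) + 2*(sqrt 3/3)^3/3 + 2*(sqrt 3/3)^5/5 = sqrt 3 * (102/135)).
  { replace ((sqrt 3/3)^3) with ((sqrt 3 * sqrt 3) * sqrt 3 / 27) by field.
    replace ((sqrt 3/3)^5) with ((sqrt 3 * sqrt 3) * (sqrt 3 * sqrt 3) * sqrt 3 / 243) by field.
    rewrite H3. field. }
  rewrite Ez.
  assert (Hy : 0.2679 < y0 < 0.268) by (unfold y0; lra).
  assert (Hy3 : y0^3 < 0.0193).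
  { assert (y0^3 <= 0.268^3). { apply pow_incr. lra. } lra. }
  assert (HL : 1.3086 < sqrt 3 * (102/135)) by lra.
  assert (4 * 3.14 * 1.3086 < 4 * PI * (sqrt 3 * (102/135))).
  { assert (0 < (PI - 3.14) * (sqrt 3 * (102/135))) by (apply Rmult_lt_0_compat; lra). lra. }
  lra.
Qed.

Theorem theorem4p4 :
  exists m d vtet,
    is_mahler_measure pC0 m /\
    is_BlochWigner (0, 2 + sqrt 3) d /\
    is_BlochWigner (cos (PI / 3), sin (PI / 3)) vtet /\
    2 * PI * m = 16 * d + 8 * PI / 3 * ln (2 + sqrt 3) /\
    20 * vtet < 2 * PI * m.
Proof.
  pose proof sqrt3_bounds as Hr. pose proof PI_RGT_0 as Hpi. pose proof y0_bounds as Hy.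
  exists mM, (J kk - 5*PI/12*ln kk), (RInt Phi 0 1).
  split; [apply mahler|]. split; [apply BW_d|]. split; [apply BW_v|].
  assert (Lk : ln y0 = - ln kk) by (rewrite <- kk_y0; apply ln_Rinv; unfold kk; lra).
  split.
  - rewrite two_pi_mM. rewrite (J_inv kk) by (unfold kk; lra). rewrite kk_y0, Lk.
    fold kk. field.
  - rewrite two_pi_mM. rewrite Lk.
    assert (L1 := J_lb y0 (proj1 (conj (Rlt_le _ _ (proj1 Hy)) I))).
    assert (L2 : 2*(sqrt 3/3) + 2*(sqrt 3/3)^3/3 + 2*(sqrt 3/3)^5/5 <= ln kk).
    { rewrite kk_z. apply ln_series_lb. lra. }
    pose proof V_ub. pose proof final_num.
    assert (4 * PI * (2*(sqrt 3/3) + 2*(sqrt 3/3)^3/3 + 2*(sqrt 3/3)^5/5) <= 4 * PI * ln kk).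
    { apply Rmult_le_compat_l. lra. auto. }
    lra.
Qed.
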